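(* Let $G_i=(V_i,E_i)$ be a simple graph of maximum degree $\Delta_i$, $i\in\{1,2\}$, and let $S\subseteq V_1\times V_2$. Then: (i) If, for some $i\in\{1,2\}$ and integer $k_i$, $P_{V_i}(S)$ is a $k_i$-daf set in $G_i$, then $S$ is a $(k_i+\Delta_j)$-daf set in $G_1\times G_2$, where $j\in\{1,2\}$, $j\neq i$. (ii) If, for integers $k_1,k_2$, $P_{V_1}(S)$ is a $k_1$-daf set in $G_1$ and $P_{V_2}(S)$ is a $k_2$-daf set in $G_2$, then $S$ is a $(k_1+k_2-1)$-daf set in $G_1\times G_2$.
   Context: All graphs are finite and simple. For a graph $G=(V,E)$, a set $S\subseteq V$ and $v\in V$, let $\delta_S(v)=|\{u\in S: uv\in E\}|$, $\delta(v)$ the degree of $v$, and $\overline{S}=V\setminus S$. For an integer $k$, a non-empty set $S\subseteq V$ is a defensive $k$-alliance if $\delta_S(v)\ge \delta_{\overline S}(v)+k$ for every $v\in S$. A set $X\subseteq V$ is a defensive $k$-alliance free set ($k$-daf set) if no defensive $k$-alliance $S$ satisfies $S\subseteq X$. The Cartesian product $G_1\times G_2$ of $G_1=(V_1,E_1)$, $G_2=(V_2,E_2)$ has vertex set $V_1\times V_2$, with $(a,b)$ adjacent to $(c,d)$ iff either $a=c$ and $bd\in E_2$, or $b=d$ and $ac\in E_1$. For $A\subseteq V_1\times V_2$, $P_{V_i}(A)$ denotes the projection of $A$ onto $V_i$. *)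

(* Defs.v *)
From mathcomp Require Import all_boot all_order all_algebra.
Set Implicit Arguments. Unset Strict Implicit. Unset Printing Implicit Defensive.
Import Order.TTheory GRing.Theory Num.Theory.

Definition simple_graph (T : finType) (e : rel T) : Prop :=
  symmetric e /\ irreflexive e.

Definition deg_in (T : finType) (e : rel T) (S : {set T}) (v : T) : nat :=
  #|[set u in S | e v u]|.

Definition deg (T : finType) (e : rel T) (v : T) : nat := deg_in e [set: T] v.

Definition maxdeg (T : finType) (e : rel T) : nat := \max_(v : T) deg e v.

Definition def_alliance (T : finType) (e : rel T) (k : int) (S : {set T}) : Prop :=
  S != set0 /\
  forall v, v \in S -> ((deg_in e S v)%:Z >= (deg_in e (~: S) v)%:Z + k)%R.

Definition daf (T : finType) (e : rel T) (k : int) (X : {set T}) : Prop :=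
  forall S : {set T}, S \subset X -> ~ def_alliance e k S.

Definition cart_prod (T1 T2 : finType) (e1 : rel T1) (e2 : rel T2) : rel (T1 * T2) :=
  fun x y => ((x.1 == y.1) && e2 x.2 y.2) || ((x.2 == y.2) && e1 x.1 y.1).

Definition proj1 (T1 T2 : finType) (S : {set T1 * T2}) : {set T1} := [set x.1 | x in S].
Definition proj2 (T1 T2 : finType) (S : {set T1 * T2}) : {set T2} := [set x.2 | x in S].

(* Main.v *)
Require Import Defs.
From mathcomp Require Import all_boot all_order all_algebra zify.
Import Order.TTheory GRing.Theory Num.Theory.
Set Implicit Arguments.

Section S.
Variables (T1 T2 : finType) (e1 : rel T1) (e2 : rel T2).
Hypothesis i2 : irreflexive e2.

Definition row (B : {set T1 * T2}) y := [set a | (a, y) \in B].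
Definition col (B : {set T1 * T2}) x := [set b | (x, b) \in B].

Lemma deg_cart B x y : deg_in (cart_prod e1 e2) B (x, y) =
  deg_in e1 (row B y) x + deg_in e2 (col B x) y.
Proof.
rewrite /deg_in.
have -> : [set u in B | cart_prod e1 e2 (x, y) u] =
  [set (x, b) | b in [set b in col B x | e2 y b]] :|:
  [set (a, y) | a in [set a in row B y | e1 x a]].
  apply/setP => -[a b]; rewrite !inE /cart_prod /=.
  apply/idP/idP.
  - case/andP=> hB /orP[/andP[/eqP ea hb]|/andP[/eqP eb ha]]; subst; apply/orP.
    + by left; apply/imsetP; exists b => //; rewrite !inE /=; apply/andP.
    + by right; apply/imsetP; exists a => //; rewrite !inE /=; apply/andP.
  - case/orP=> /imsetP[c]; rewrite !inE => /andP[hc hc'] [-> ->];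
    by rewrite hc /= eqxx hc' ?orbT.
have h0 : #|[set (x, b) | b in [set b in col B x | e2 y b]] :&:
  [set (a, y) | a in [set a in row B y | e1 x a]]| = 0.
  apply/eqP; rewrite cards_eq0; apply/eqP/setP => -[a b]; rewrite !inE.
  apply/negbTE/negP => /andP[/imsetP[c]]; rewrite !inE => /andP[_ hc] [-> ->].
  case/imsetP=> d _ [_ hy]; by rewrite -hy i2 in hc.
rewrite -[LHS]addn0 -{1}h0 cardsUI addnC !card_imset //; by move=> ? ? [] .
Qed.

Lemma row_compl B y : row (~: B) y = ~: row B y.
Proof. by apply/setP=> a; rewrite !inE. Qed.
Lemma col_compl B x : col (~: B) x = ~: col B x.
Proof. by apply/setP=> a; rewrite !inE. Qed.

End S.

Lemma deg_in_mono (T : finType) (e : rel T) (S S' : {set T}) (v : T) : S \subset S' ->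
  deg_in e S v <= deg_in e S' v.
Proof.
move=> hS; apply: subset_leq_card; apply/subsetP => u; rewrite !inE.
by case/andP=> h1 h2; rewrite (subsetP hS _ h1) h2.
Qed.

Lemma bad_vertex (T : finType) (e : rel T) (k : int) (X Z : {set T}) : daf e k X -> Z \subset X ->
  Z != set0 -> exists z, z \in Z /\
   ((deg_in e Z z)%:Z < (deg_in e (~: Z) z)%:Z + k)%R.
Proof.
move=> hd hZ hne.
case: (boolP [exists z in Z, ((deg_in e Z z)%:Z < (deg_in e (~: Z) z)%:Z + k)%R]).
  by case/exists_inP=> z h1 h2; exists z.
move=> hn; exfalso; apply: (hd Z hZ); split => // v hv.
rewrite leNgt; apply/negP => h; move/negP: hn; apply; apply/exists_inP.
by exists v.
Qed.

Lemma peel (T : finType) (e : rel T) (k : int) (X W : {set T}) : daf e k X -> W \subset X ->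
  W != set0 -> exists Z : {set T}, [/\ Z \subset X, W \subset Z & exists w, w \in W /\
   ((deg_in e Z w)%:Z < (deg_in e (~: Z) w)%:Z + k)%R].
Proof.
move=> hd hWX hW.
suff: forall n (Y : {set T}), #|Y| <= n -> Y \subset X -> W \subset Y ->
  exists Z : {set T}, [/\ Z \subset X, W \subset Z & exists w, w \in W /\
   ((deg_in e Z w)%:Z < (deg_in e (~: Z) w)%:Z + k)%R].
  by move/(_ #|X| X (leqnn _) (subxx _) hWX).
elim=> [|n IH] Y hY hYX hWY.
  exfalso; move: hY; rewrite leqn0 cards_eq0 => /eqP hY0.
  by move: hWY hW; rewrite hY0 subset0 => ->.
have hY0 : Y != set0.
  apply/negP => /eqP hY0; by move: hWY hW; rewrite hY0 subset0 => ->.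
have [z [hz hb]] := bad_vertex hd hYX hY0.
case: (boolP (z \in W)) => hzW.
  by exists Y; split => //; exists z.
apply: (IH (Y :\ z)).
- by rewrite (cardsD1 z Y) hz add1n ltnS in hY.
- by apply: subset_trans hYX; apply: subsetDl.
- apply/subsetP => w hw; rewrite !inE (subsetP hWY _ hw) andbT.
  by apply/negP => /eqP hwz; rewrite -hwz hw in hzW.
Qed.

Lemma key (T1 T2 : finType) (e1 : rel T1) (e2 : rel T2) (i2 : irreflexive e2)
  (A : {set T1 * T2}) x y (k1 k2 : int) (Z1 : {set T1}) (Z2 : {set T2}) :
  row A y \subset Z1 -> col A x \subset Z2 ->
  ((deg_in e1 Z1 x)%:Z < (deg_in e1 (~:Z1) x)%:Z + k1)%R ->
  ((deg_in e2 Z2 y)%:Z < (deg_in e2 (~:Z2) y)%:Z + k2)%R ->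
  ((deg_in (cart_prod e1 e2) A (x,y))%:Z <
     (deg_in (cart_prod e1 e2) (~:A) (x,y))%:Z + (k1 + k2 - 1))%R.
Proof.
move=> hR hC h1 h2; rewrite !deg_cart // row_compl col_compl.
have a1 := deg_in_mono e1 x hR.
have a2 := deg_in_mono e2 y hC.
have b1 := deg_in_mono e1 x (introT idP (etrans (setCS _ _) hR) : ~: Z1 \subset ~: row A y).
have b2 := deg_in_mono e2 y (introT idP (etrans (setCS _ _) hC) : ~: Z2 \subset ~: col A x).
lia.
Qed.

Lemma row_proj (T1 T2 : finType) (A : {set T1 * T2}) y : row A y \subset proj1 A.
Proof. by apply/subsetP => a; rewrite inE => h; apply/imsetP; exists (a, y). Qed.
Lemma col_proj (T1 T2 : finType) (A : {set T1 * T2}) x : col A x \subset proj2 A.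
Proof. by apply/subsetP => a; rewrite inE => h; apply/imsetP; exists (x, a). Qed.

Lemma deg_max (T : finType) (e : rel T) (y : T) (k : int) :
  ((deg_in e setT y)%:Z < (deg_in e (~: setT) y)%:Z + ((maxdeg e)%:Z + 1))%R.
Proof.
have := @leq_bigmax T (fun v => deg e v) y; rewrite /maxdeg /deg => h; lia.
Qed.

Lemma daf_sub (T : finType) (e : rel T) k (X Y : {set T}) :
  daf e k X -> Y \subset X -> daf e k Y.
Proof. by move=> hd hYX Z hZ; apply: hd; apply: subset_trans hYX. Qed.

Unset Implicit Arguments.

Theorem theorem1 (T1 T2 : finType) (e1 : rel T1) (e2 : rel T2)
  (g1 : simple_graph e1) (g2 : simple_graph e2) (S : {set T1 * T2}) :
  (* (i), i = 1, j = 2 *)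
  (forall k1 : int, daf e1 k1 (proj1 S) ->
     daf (cart_prod e1 e2) (k1 + (maxdeg e2)%:Z)%R S) /\
  (* (i), i = 2, j = 1 *)
  (forall k2 : int, daf e2 k2 (proj2 S) ->
     daf (cart_prod e1 e2) (k2 + (maxdeg e1)%:Z)%R S) /\
  (* (ii) *)
  (forall k1 k2 : int, daf e1 k1 (proj1 S) -> daf e2 k2 (proj2 S) ->
     daf (cart_prod e1 e2) (k1 + k2 - 1)%R S).
Proof.
have i2 := g2.2.
have ne1 : forall A : {set T1 * T2}, A != set0 -> proj1 A != set0.
  move=> A; case/set0Pn => u hu; apply/set0Pn; exists u.1; apply/imsetP; by exists u.
have ne2 : forall A : {set T1 * T2}, A != set0 -> proj2 A != set0.
  move=> A; case/set0Pn => u hu; apply/set0Pn; exists u.2; apply/imsetP; by exists u.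
split; [|split].
- move=> k1 hd A hAS [hne hall].
  have [x [hx hb]] := bad_vertex (daf_sub hd (imsetS _ hAS)) (subxx _) (ne1 _ hne).
  case/imsetP: hx => -[a y] hu /= hxa; subst a.
  have := key e1 i2 _ _ (row_proj A y) (subsetT (col A x)) hb
     (deg_max _ e2 y 0).
  move=> H2; have H1 := hall _ hu.
  have E : forall a b : int, (a + (b + 1) - 1 = a + b)%R by move=> a b; rewrite addrA addrK.
  rewrite E in H2.
  by have := lt_le_trans H2 H1; rewrite ltxx.
- move=> k2 hd A hAS [hne hall].
  have [y [hy hb]] := bad_vertex (daf_sub hd (imsetS _ hAS)) (subxx _) (ne2 _ hne).
  case/imsetP: hy => -[x b] hu /= hyb; subst b.
  have := key e1 i2 _ _ (subsetT (row A y)) (col_proj A x)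
     (deg_max _ e1 x 0) hb.
  move=> H2; have H1 := hall _ hu.
  have E : forall a b : int, (b + 1 + a - 1 = a + b)%R by move=> a b; rewrite addrAC addrK addrC.
  rewrite E in H2.
  by have := lt_le_trans H2 H1; rewrite ltxx.
- move=> k1 k2 hd1 hd2 A hAS [hne hall].
  have [x [hx hb]] := bad_vertex (daf_sub hd1 (imsetS _ hAS)) (subxx _) (ne1 _ hne).
  have hW : col A x != set0.
    case/imsetP: hx => -[a b] hu /= ->; apply/set0Pn; exists b; by rewrite inE.
  have [Z2 [hZ2 hWZ [y [hy hb2]]]] :=
    peel hd2 (subset_trans (col_proj A x) (imsetS _ hAS)) hW.
  have hu : (x, y) \in A by move: hy; rewrite inE.
  have := key e1 i2 _ _ (row_proj A y) hWZ hb hb2.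
  move=> H2; have H1 := hall _ hu.
  by have := lt_le_trans H2 H1; rewrite ltxx.
Qed.
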